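(* Let $\beta\in C^0[0,1]$ with $\bar\beta=\|\beta\|_\infty$, let $k=\mathcal{K}(\beta)$ be the exact backstepping kernel, and let $\hat k\in C^0[0,1]$ satisfy $|k(x)-\hat k(x)|<\epsilon$ for all $x\in[0,1]$. Then the kernel $\hat l$ of the inverse of the transformation $\hat w(x)=u(x)-\int_0^x\hat k(x-y)u(y)\,dy$, namely the function with $u(x)=\hat w(x)+\int_0^x\hat l(x-y)\hat w(y)\,dy$, satisfies for all $x\in[0,1]$ $$|\hat l(x)|\le\big(\bar\beta+(1+\bar\beta)\epsilon\big)e^{(1+\bar\beta)\epsilon x}.$$
   Context: The backstepping kernel operator $\mathcal{K}$ maps $\beta\in C^0[0,1]$ to the solution $k$ of $k(x)=-\beta(x)+\int_0^x\beta(x-y)k(y)\,dy$, $x\in[0,1]$. $\|\cdot\|_\infty$ is the supremum norm on $[0,1]$. *)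

(* Defs.v *)
From Stdlib Require Import Reals.
From Coquelicot Require Import Coquelicot.
Open Scope R_scope.

Definition cont01 (f : R -> R) : Prop :=
  forall x, 0 <= x <= 1 ->
  forall eps, 0 < eps -> exists delta, 0 < delta /\
    forall y, 0 <= y <= 1 -> Rabs (y - x) < delta -> Rabs (f y - f x) < eps.

Definition is_supnorm01 (f : R -> R) (bb : R) : Prop :=
  (forall x, 0 <= x <= 1 -> Rabs (f x) <= bb) /\
  (forall M, (forall x, 0 <= x <= 1 -> Rabs (f x) <= M) -> bb <= M).

Definition conv (a b : R -> R) (x : R) : R :=
  RInt (fun y => a (x - y) * b y) 0 x.

(* k solves the backstepping kernel equation, i.e. k = K(beta):
   k(x) = -beta(x) + int_0^x beta(x-y) k(y) dy on [0,1]. *)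
Definition is_kernel_of (beta k : R -> R) : Prop :=
  cont01 k /\ forall x, 0 <= x <= 1 -> k x = - beta x + conv beta k x.

Definition is_inverse_kernel (kh lh : R -> R) : Prop :=
  cont01 lh /\
  forall u : R -> R, cont01 u ->
    let w := fun x => u x - conv kh u x in
    forall x, 0 <= x <= 1 -> u x = w x + conv lh w x.

(* Main.v *)
Require Import Defs.
From Stdlib Require Import Reals Lra.
From Coquelicot Require Import Coquelicot.
Open Scope R_scope.
Ltac rring := match goal with |- ?l = ?r => change (@eq R l r) end; ring.

Definition gc (f : R -> R) := forall x, continuous f x.

Lemma RInt_minus' (f g : R -> R) a b : ex_RInt f a b -> ex_RInt g a b ->
  RInt (fun x => f x - g x) a b = RInt f a b - RInt g a b.
Proof. intros. exact (RInt_minus f g a b H H0). Qed.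
Lemma RInt_plus' (f g : R -> R) a b : ex_RInt f a b -> ex_RInt g a b ->
  RInt (fun x => f x + g x) a b = RInt f a b + RInt g a b.
Proof. intros. exact (RInt_plus f g a b H H0). Qed.
Lemma RInt_scal' (f : R -> R) a b l : ex_RInt f a b ->
  RInt (fun x => l * f x) a b = l * RInt f a b.
Proof. intros. exact (RInt_scal f a b l H). Qed.

Lemma gc_ex (f : R -> R) a b : gc f -> ex_RInt f a b.
Proof. intros H; apply (ex_RInt_continuous (V := R_CompleteNormedModule)); intros; apply H. Qed.

Lemma gc_derive (f : R -> R) a x : gc f -> is_derive (fun b => RInt f a b) x (f x).
Proof.
  intros H. apply (is_derive_RInt (V := R_NormedModule) f (fun b => RInt f a b) a).
  - exists (mkposreal 1 Rlt_0_1); intros; apply (RInt_correct (V := R_CompleteNormedModule)), gc_ex, H.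
  - apply H.
Qed.

Lemma cont_of_pt (f : R -> R) x : continuity_pt f x -> continuous f x.
Proof. intros; now apply continuity_pt_filterlim. Qed.
Lemma pt_of_cont (f : R -> R) x : continuous f x -> continuity_pt f x.
Proof. intros; now apply continuity_pt_filterlim. Qed.

Lemma cont_epsdelta (f : R -> R) x :
  (forall eps, 0 < eps -> exists d, 0 < d /\ forall y, Rabs (y - x) < d -> Rabs (f y - f x) < eps) ->
  continuous f x.
Proof.
  intros H; apply cont_of_pt. intros eps Heps.
  destruct (H eps Heps) as [d [Hd Hy]]. exists d; split; auto.
  intros y [_ Hy']. simpl in *. unfold R_dist in *. now apply Hy.
Qed.

Lemma epsdelta_cont (f : R -> R) x : continuous f x ->
  forall eps, 0 < eps -> exists d, 0 < d /\ forall y, Rabs (y - x) < d -> Rabs (f y - f x) < eps.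
Proof.
  intros H%pt_of_cont eps Heps. destruct (H eps Heps) as [d [Hd Hy]].
  exists d; split; auto. intros y Hyx.
  destruct (Req_dec y x) as [->|Hne]. rewrite Rminus_eq_0, Rabs_R0; auto.
  apply Hy. split. split. constructor. auto. simpl; unfold R_dist; auto.
Qed.

Lemma gc_comp_lin (f : R -> R) u v : gc f -> gc (fun t => f (u * t + v)).
Proof.
  intros H x. apply continuous_comp with (f := fun t => u * t + v) (g := f).
  - apply cont_of_pt. apply continuity_pt_plus. apply continuity_pt_mult.
    apply continuity_pt_const; intros ??; auto. apply continuity_pt_id.
    apply continuity_pt_const; intros ??; auto.
  - apply H.
Qed.


Definition gc2 (g : R -> R -> R) := forall x y, continuity_2d_pt g x y.

Lemma c2d_slice2 g x t : continuity_2d_pt g x t -> continuous (g x) t.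
Proof.
  intros H. apply cont_epsdelta. intros eps Heps.
  destruct (H (mkposreal eps Heps)) as [d Hd]. exists d; split. apply cond_pos.
  intros y Hy. apply (Hd x y); auto. rewrite Rminus_eq_0, Rabs_R0; apply cond_pos.
Qed.

Lemma c2d_slice1 g x t : continuity_2d_pt g x t -> continuous (fun u => g u t) x.
Proof.
  intros H. apply cont_epsdelta. intros eps Heps.
  destruct (H (mkposreal eps Heps)) as [d Hd]. exists d; split. apply cond_pos.
  intros y Hy. apply (Hd y t); auto. rewrite Rminus_eq_0, Rabs_R0; apply cond_pos.
Qed.

Lemma c2d_swap g x y : continuity_2d_pt g x y -> continuity_2d_pt (fun u v => g v u) y x.
Proof.
  intros H eps. destruct (H eps) as [d Hd]. exists d. intros u v Hu Hv. apply Hd; auto.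
Qed.

Lemma param_cont_le (g : R -> R -> R) a b x0 : gc2 g -> a <= b ->
  continuous (fun x => RInt (g x) a b) x0.
Proof.
  intros Hg Hab. apply cont_epsdelta. intros eps Heps.
  assert (He' : 0 < eps / (2 * (b - a + 1))).
  { apply Rdiv_lt_0_compat; lra. }
  destruct (uniform_continuity_2d g (x0 - 1) (x0 + 1) a b
     (fun x y _ _ => Hg x y) (mkposreal _ He')) as [d Hd].
  exists (Rmin d 1). split. apply Rmin_pos; [apply cond_pos|lra].
  intros y Hy.
  assert (Hy1 : Rabs (y - x0) < d) by (eapply Rlt_le_trans; [apply Hy|apply Rmin_l]).
  assert (Hy2 : Rabs (y - x0) < 1) by (eapply Rlt_le_trans; [apply Hy|apply Rmin_r]).
  rewrite <- RInt_minus'.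
  2,3: apply (ex_RInt_continuous (V := R_CompleteNormedModule)); intros; apply c2d_slice2, Hg.
  eapply Rle_lt_trans.
  apply abs_RInt_le_const with (M := eps / (2 * (b - a + 1))); auto.
  apply (ex_RInt_continuous (V := R_CompleteNormedModule)); intros.
  apply cont_of_pt, continuity_pt_minus; apply pt_of_cont, c2d_slice2, Hg.
  intros t Ht. left. simpl. apply Hd; try lra.
  apply Rabs_lt_between' in Hy2; lra.
  rewrite Rminus_eq_0, Rabs_R0; apply cond_pos.
  apply Rle_lt_trans with (eps * ((b - a) / (2 * (b - a + 1)))).
  right; field; lra.
  rewrite <- (Rmult_1_r eps) at 2. apply Rmult_lt_compat_l; auto.
  apply Rmult_lt_reg_r with (2 * (b - a + 1)). lra.
  unfold Rdiv; rewrite Rmult_assoc, Rinv_l; lra.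
Qed.

Lemma param_cont (g : R -> R -> R) a b x0 : gc2 g ->
  continuous (fun x => RInt (g x) a b) x0.
Proof.
  intros Hg. destruct (Rle_dec a b). now apply param_cont_le.
  apply continuous_ext with (f := fun x => - RInt (g x) b a).
  intros x. rewrite <- (opp_RInt_swap (V := R_CompleteNormedModule) (g x) a b).
  apply Ropp_involutive.
  apply (ex_RInt_continuous (V := R_CompleteNormedModule)); intros; apply c2d_slice2, Hg.
  apply cont_of_pt, continuity_pt_opp, pt_of_cont, param_cont_le; auto; lra.
Qed.


Lemma c2d_comp2 g p q x y : continuity_2d_pt g (p x y) (q x y) ->
  continuity_2d_pt p x y -> continuity_2d_pt q x y ->
  continuity_2d_pt (fun u v => g (p u v) (q u v)) x y.
Proof.
  intros Hg Hp Hq eps. destruct (Hg eps) as [d1 H1].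
  destruct (Hp d1) as [d2 H2]. destruct (Hq d1) as [d3 H3].
  assert (Hd : 0 < Rmin d2 d3) by (apply Rmin_pos; apply cond_pos).
  exists (mkposreal _ Hd). intros u v Hu Hv. simpl in Hu, Hv.
  apply H1. apply H2; eapply Rlt_le_trans; eauto; [apply Rmin_l|apply Rmin_l].
  apply H3; eapply Rlt_le_trans; eauto; [apply Rmin_r|apply Rmin_r].
Qed.

Lemma c2d_1d f g x y : gc f -> continuity_2d_pt g x y ->
  continuity_2d_pt (fun u v => f (g u v)) x y.
Proof. intros Hf Hg. apply continuity_1d_2d_pt_comp; auto. apply pt_of_cont, Hf. Qed.

Lemma var_cont (g : R -> R -> R) y0 : gc2 g ->
  continuous (fun y => RInt (g y) 0 y) y0.
Proof.
  intros Hg.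
  apply continuous_ext with (f := fun y => RInt (fun s => y * g y (y * s)) 0 1).
  - intros y. 
    assert (E := RInt_comp_lin (V := R_CompleteNormedModule) (g y) y 0 0 1).
    rewrite Rmult_0_r, !Rplus_0_r, Rmult_1_r in E.
    rewrite <- E. apply RInt_ext. intros s _. simpl. rewrite Rplus_0_r. reflexivity.
    apply (ex_RInt_continuous (V := R_CompleteNormedModule)); intros; apply c2d_slice2, Hg.
  - apply param_cont. intros x s.
    apply continuity_2d_pt_mult. apply continuity_2d_pt_id1.
    apply c2d_comp2 with (g := g) (p := fun u v => u) (q := fun u v => u * v).
    apply Hg. apply continuity_2d_pt_id1.
    apply continuity_2d_pt_mult. apply continuity_2d_pt_id1. apply continuity_2d_pt_id2.
Qed.

Definition conv' := conv.

Lemma conv_cont a b : gc a -> gc b -> gc (conv a b).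
Proof.
  intros Ha Hb x. unfold conv.
  apply (var_cont (fun x y => a (x - y) * b y)).
  intros u v. apply continuity_2d_pt_mult.
  apply c2d_1d; auto. apply continuity_2d_pt_minus. apply continuity_2d_pt_id1. apply continuity_2d_pt_id2.
  apply c2d_1d with (g := fun _ v => v); auto. apply continuity_2d_pt_id2.
Qed.

Lemma ex_conv a b x : gc a -> gc b -> ex_RInt (fun y => a (x - y) * b y) 0 x.
Proof.
  intros Ha Hb. apply gc_ex. intros y.
  apply cont_of_pt. apply continuity_pt_mult; apply pt_of_cont.
  apply (continuous_ext (fun t : R => a (-1 * t + x))). intros t. f_equal. ring.
  apply (gc_comp_lin a (-1) x Ha y).
  apply Hb.
Qed.


Lemma deriv0_const (h : R -> R) X : (forall x, is_derive h x 0) -> h X = h 0.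
Proof.
  intros H.
  assert (E := is_RInt_derive (V := R_CompleteNormedModule) h (fun _ => 0) 0 X (fun x _ => H x)
     (fun x _ => continuous_const 0 x)).
  apply is_RInt_unique in E. rewrite RInt_const in E.
  unfold scal, minus, plus, opp in E; simpl in E. unfold mult in E; simpl in E. 
  lra.
Qed.

Lemma gc2_swap f : gc2 f -> gc2 (fun u v => f v u).
Proof. intros H x y. apply c2d_swap, H. Qed.

Lemma fubini_tri (f : R -> R -> R) X : gc2 f ->
  RInt (fun y => RInt (fun z => f y z) 0 y) 0 X = RInt (fun z => RInt (fun y => f y z) z X) 0 X.
Proof.
  intros Hf.
  set (F := (fun u z => RInt (fun y => f y z) 0 u) : R -> R -> R).
  assert (HFz : forall u z, continuous (fun z => F u z) z).
  { intros u z. unfold F. apply (param_cont (fun z y => f y z)). apply gc2_swap, Hf. }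
  assert (HFd : forall z : R, continuous (fun z => F z z) z).
  { intros z. unfold F. apply (var_cont (fun z y => f y z)). apply gc2_swap, Hf. }
  assert (Hfs : forall z, gc (fun y => f y z)).
  { intros z y. apply c2d_slice1, Hf. }
  assert (HFder : forall u z, is_derive (fun u => F u z) u (f u z)).
  { intros u z. unfold F. apply (gc_derive (fun y => f y z)). apply Hfs. }
  assert (E2 : forall X, RInt (fun z => RInt (fun y => f y z) z X) 0 X =
     RInt (fun z => F X z) 0 X - RInt (fun z => F z z) 0 X).
  { intros Y. rewrite <- RInt_minus'. apply RInt_ext. intros z _. unfold F.
    rewrite <- (RInt_Chasles (V := R_CompleteNormedModule) (fun y => f y z) 0 z Y).
    unfold plus; simpl. lra.
    apply gc_ex, Hfs. apply gc_ex, Hfs.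
    apply gc_ex; intros z; apply HFz. apply gc_ex; intros z; apply HFd. }
  set (T := fun X => RInt (fun y => RInt (fun z => f y z) 0 y) 0 X -
                     (RInt (fun z => F X z) 0 X - RInt (fun z => F z z) 0 X)).
  assert (HT : forall x, is_derive T x 0).
  { intros x. unfold T.
    cut (is_derive T x (RInt (fun z => f x z) 0 x - ((RInt (fun z => f x z) 0 x + F x x * 1) - F x x))).
    { intros Hx. set (r := RInt (fun z => f x z) 0 x) in Hx. set (q := F x x) in Hx.
      replace (r - (r + q * 1 - q)) with 0 in Hx by (clearbody r q; lra). exact Hx. }
    apply (is_derive_minus (K := R_AbsRing) (V := R_NormedModule)).
    apply (gc_derive (fun y => RInt (fun z => f y z) 0 y)). intros y. apply (var_cont f), Hf.
    apply (is_derive_minus (K := R_AbsRing) (V := R_NormedModule)).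
    2: { apply (gc_derive (fun z => F z z)). intros y; apply HFd. }
    assert (Hd : forall t, Derive (fun u => F u t) x = f x t).
    { intros t. apply is_derive_unique, HFder. }
    rewrite <- (RInt_ext (fun t => Derive (fun u => F u t) x)).
    2: { intros; apply Hd. }
    apply (is_derive_RInt_param_bound_comp_aux3 F 0 (fun x => x) x 1).
    - apply filter_forall. intros y. apply gc_ex. intros z; apply HFz.
    - exists (mkposreal 1 Rlt_0_1). apply filter_forall. intros y. apply gc_ex. intros z; apply HFz.
    - apply (is_derive_id (K := R_AbsRing)).
    - exists (mkposreal 1 Rlt_0_1). apply filter_forall. intros y t _. eexists. apply HFder.
    - intros t _. apply continuity_2d_pt_ext with (f := f). intros; symmetry; apply is_derive_unique, HFder.
      apply Hf.
    - exists (mkposreal 1 Rlt_0_1). intros u v _ _.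
      apply continuity_2d_pt_ext with (f := f). intros; symmetry; apply is_derive_unique, HFder.
      apply Hf.
    - apply pt_of_cont, HFz. }
  assert (E0 := deriv0_const T X HT).
  unfold T in E0. rewrite !RInt_point in E0. rewrite E2. unfold zero in E0; simpl in E0. lra.
Qed.


Lemma conv_ext a a' b b' x : 0 <= x <= 1 ->
  (forall t, 0 <= t <= 1 -> a t = a' t) -> (forall t, 0 <= t <= 1 -> b t = b' t) ->
  conv a b x = conv a' b' x.
Proof.
  intros Hx Ha Hb. unfold conv. apply RInt_ext.
  rewrite Rmin_left, Rmax_right by lra. intros y Hy.
  rewrite Ha, Hb by lra. reflexivity.
Qed.

Lemma conv_minus_l a b c x : gc a -> gc b -> gc c ->
  conv (fun t => a t - b t) c x = conv a c x - conv b c x.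
Proof.
  intros Ha Hb Hc. unfold conv. rewrite <- RInt_minus' by (apply ex_conv; auto).
  apply RInt_ext. intros; rring.
Qed.
Lemma conv_plus_l a b c x : gc a -> gc b -> gc c ->
  conv (fun t => a t + b t) c x = conv a c x + conv b c x.
Proof.
  intros Ha Hb Hc. unfold conv. rewrite <- RInt_plus' by (apply ex_conv; auto).
  apply RInt_ext. intros; rring.
Qed.
Lemma conv_minus_r a b c x : gc a -> gc b -> gc c ->
  conv c (fun t => a t - b t) x = conv c a x - conv c b x.
Proof.
  intros Ha Hb Hc. unfold conv. rewrite <- RInt_minus' by (apply ex_conv; auto).
  apply RInt_ext. intros; rring.
Qed.
Lemma conv_plus_r a b c x : gc a -> gc b -> gc c ->
  conv c (fun t => a t + b t) x = conv c a x + conv c b x.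
Proof.
  intros Ha Hb Hc. unfold conv. rewrite <- RInt_plus' by (apply ex_conv; auto).
  apply RInt_ext. intros; rring.
Qed.

Lemma conv_comm a b x : gc a -> gc b -> conv a b x = conv b a x.
Proof.
  intros Ha Hb. unfold conv.
  set (f := fun t => a (x - t) * b t).
  assert (Hex : ex_RInt f (-1 * 0 + x) (-1 * x + x)).
  { unfold f. apply gc_ex. intros y. apply cont_of_pt, continuity_pt_mult; apply pt_of_cont.
    apply (continuous_ext (fun t : R => a (-1 * t + x))). intros t. f_equal. ring.
    apply (gc_comp_lin a (-1) x Ha y). apply Hb. }
  assert (E := RInt_comp_lin (V := R_CompleteNormedModule) f (-1) x 0 x Hex).
  replace (-1 * 0 + x) with x in E by ring. replace (-1 * x + x) with 0 in E by ring.
  rewrite <- (opp_RInt_swap (V := R_CompleteNormedModule) f 0 x) in E.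
  2: { apply ex_conv; auto. }
  rewrite (RInt_ext _ (fun y => - (b (x - y) * a y))) in E.
  2: { intros y _. unfold f, scal; simpl; unfold mult; simpl.
       replace (x - (-1 * y + x)) with y by ring. replace (-1 * y + x) with (x - y) by ring. ring. }
  rewrite (RInt_opp (V := R_CompleteNormedModule)) in E.
  2: { apply ex_conv; auto. }
  unfold opp in E; simpl in E. unfold f in E |- *. lra.
Qed.

Lemma gc_lin_comp a u v : gc a -> forall y, continuous (fun t => a (u * t + v)) y.
Proof. intros; apply gc_comp_lin; auto. Qed.

Lemma conv_assoc a b c x : gc a -> gc b -> gc c ->
  conv (conv a b) c x = conv a (conv b c) x.
Proof.
  intros Ha Hb Hc. symmetry. unfold conv at 1.
  rewrite (RInt_ext _ (fun y => RInt (fun z => a (x - y) * (b (y - z) * c z)) 0 y)).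
  2: { intros y _. unfold conv. rewrite RInt_scal'. reflexivity. apply ex_conv; auto. }
  rewrite (fubini_tri (fun y z => a (x - y) * (b (y - z) * c z))).
  2: { intros u v. apply continuity_2d_pt_mult.
       apply c2d_1d with (g := fun u v => x - u); auto.
       apply continuity_2d_pt_minus. apply continuity_2d_pt_const. apply continuity_2d_pt_id1.
       apply continuity_2d_pt_mult.
       apply c2d_1d with (g := fun u v => u - v); auto.
       apply continuity_2d_pt_minus. apply continuity_2d_pt_id1. apply continuity_2d_pt_id2.
       apply c2d_1d with (g := fun u v => v); auto. apply continuity_2d_pt_id2. }
  unfold conv. apply RInt_ext. intros z _.
  set (h := fun y => a (x - y) * b (y - z)).
  assert (Hh : gc h).
  { unfold h. intros y. apply cont_of_pt, continuity_pt_mult; apply pt_of_cont.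
    apply (continuous_ext (fun t : R => a (-1 * t + x))). intros t. f_equal. ring.
    apply gc_lin_comp; auto.
    apply (continuous_ext (fun t : R => b (1 * t + - z))). intros t. f_equal. ring.
    apply gc_lin_comp; auto. }
  assert (E := RInt_comp_lin (V := R_CompleteNormedModule) h 1 z 0 (x - z) (gc_ex _ _ _ Hh)).
  replace (1 * 0 + z) with z in E by ring. replace (1 * (x - z) + z) with x in E by ring.
  rewrite (RInt_ext _ (fun y => c z * h y)).
  2: { intros; unfold h; rring. }
  rewrite RInt_scal'. 2: { apply gc_ex, Hh. }
  rewrite <- E. rewrite Rmult_comm. f_equal. apply RInt_ext. intros t _.
  unfold h, scal; simpl; unfold mult; simpl.
  replace (x - (1 * t + z)) with (x - z - t) by ring. replace (1 * t + z - z) with t by ring. ring.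
Qed.


Lemma gc_abs f : gc f -> gc (fun y => Rabs (f y)).
Proof. intros H y. apply continuous_comp. apply H. apply continuous_Rabs. Qed.

Lemma gronwall (phi : R -> R) A c : gc phi -> 0 <= A -> 0 < c ->
  (forall x, 0 <= x <= 1 -> Rabs (phi x) <= A + c * RInt (fun y => Rabs (phi y)) 0 x) ->
  forall x, 0 <= x <= 1 -> Rabs (phi x) <= A * exp (c * x).
Proof.
  intros Hp HA Hc Hb x Hx.
  set (F := fun t => RInt (fun y => Rabs (phi y)) 0 t).
  assert (HF : forall t, is_derive F t (Rabs (phi t))).
  { intros t. apply (gc_derive (fun y => Rabs (phi y))). apply gc_abs, Hp. }
  set (Psi := fun t => exp (- (c * t)) * (A + c * F t)).
  set (dPsi := fun t => - c * exp (- (c * t)) * (A + c * F t) + exp (- (c * t)) * (c * Rabs (phi t))).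
  assert (HE : forall t, is_derive (fun t => exp (- (c * t))) t (- c * exp (- (c * t)))).
  { intros t. auto_derive. auto. ring. }
  assert (HPsi : forall t, is_derive Psi t (dPsi t)).
  { intros t. unfold Psi, dPsi.
    apply (is_derive_mult (K := R_AbsRing) (fun t => exp (- (c * t))) (fun t => A + c * F t)).
    apply HE.
    apply (is_derive_ext (fun t => plus A (c * F t))). intros; reflexivity.
    replace (c * Rabs (phi t)) with (plus zero (c * Rabs (phi t))).
    apply (is_derive_plus (K := R_AbsRing) (V := R_NormedModule) (fun _ => A) (fun t => c * F t)).
    apply (is_derive_const (K := R_AbsRing) (V := R_NormedModule)).
    apply is_derive_scal, HF.
    unfold plus, zero; simpl; ring.
    intros; unfold mult; simpl; ring. }
  assert (HdF : gc F). { intros t. apply (ex_derive_continuous (K := R_AbsRing) (V := R_NormedModule)). eexists; apply HF. }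
  assert (Hd : gc dPsi).
  { intros t. unfold dPsi. apply cont_of_pt.
    apply continuity_pt_plus; apply continuity_pt_mult.
    apply continuity_pt_mult. apply continuity_pt_const; intros ??; auto.
    apply pt_of_cont, (ex_derive_continuous (K := R_AbsRing) (V := R_NormedModule)). eexists; apply HE.
    apply continuity_pt_plus. apply continuity_pt_const; intros ??; auto.
    apply continuity_pt_mult. apply continuity_pt_const; intros ??; auto.
    apply pt_of_cont, HdF.
    apply pt_of_cont, (ex_derive_continuous (K := R_AbsRing) (V := R_NormedModule)). eexists; apply HE.
    apply continuity_pt_mult. apply continuity_pt_const; intros ??; auto.
    apply pt_of_cont, gc_abs, Hp. }
  assert (I := is_RInt_derive (V := R_CompleteNormedModule) Psi dPsi 0 x (fun t _ => HPsi t) (fun t _ => Hd t)).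
  apply is_RInt_unique in I.
  assert (Hle : RInt dPsi 0 x <= RInt (fun _ => 0) 0 x).
  { apply RInt_le. lra. apply gc_ex, Hd. apply ex_RInt_const.
    intros t Ht. unfold dPsi.
    assert (0 < exp (- (c * t))) by apply exp_pos.
    assert (Rabs (phi t) <= A + c * F t) by (apply Hb; lra).
    set (e := exp (- (c * t))) in *. set (r := Rabs (phi t)) in *. set (q := A + c * F t) in *.
    replace (- c * e * q + e * (c * r)) with (- ((c * e) * (q - r))) by ring.
    assert (0 <= (c * e) * (q - r)). { apply Rmult_le_pos; [apply Rmult_le_pos|]; lra. }
    lra. }
  rewrite RInt_const, I in Hle. unfold minus, plus, opp, scal in Hle; simpl in Hle.
  unfold mult in Hle; simpl in Hle.
  unfold Psi in Hle. unfold F in Hle. rewrite RInt_point in Hle. unfold zero in Hle; simpl in Hle.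
  replace (- (c * 0)) with 0 in Hle by ring. rewrite exp_0 in Hle.
  assert (Hb' := Hb x Hx).
  assert (Hexp : exp (c * x) * exp (- (c * x)) = 1).
  { rewrite <- exp_plus. replace (c * x + - (c * x)) with 0 by ring. apply exp_0. }
  assert (Hpos : 0 < exp (c * x)) by apply exp_pos.
  set (G := RInt (fun y => Rabs (phi y)) 0 x) in *.
  assert (exp (- (c * x)) * (A + c * G) <= A) by lra.
  apply Rle_trans with (A + c * G); auto.
  apply Rmult_le_compat_l with (r := exp (c * x)) in H; [|lra].
  rewrite <- Rmult_assoc, Hexp, Rmult_1_l in H. lra.
Qed.


Lemma zero_lemma h : gc h -> (forall x, 0 <= x <= 1 -> conv h (fun _ => 1) x = 0) ->
  forall x, 0 <= x <= 1 -> h x = 0.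
Proof.
  intros Hh H0.
  assert (HI : forall x, 0 <= x <= 1 -> RInt h 0 x = 0).
  { intros x Hx. transitivity (conv h (fun _ => 1) x); [|apply H0; auto].
    rewrite conv_comm; auto.
    unfold conv. apply RInt_ext. intros; rring. intros ?; apply continuous_const. }
  assert (Hint : forall x, 0 < x < 1 -> h x = 0).
  { intros x Hx.
    assert (Hd1 := gc_derive h 0 x Hh).
    assert (Hpos : 0 < Rmin x (1 - x)) by (apply Rmin_pos; lra).
    assert (Hd2 : is_derive (fun b => RInt h 0 b) x 0).
    { apply (is_derive_ext_loc (fun _ => 0)).
      exists (mkposreal _ Hpos). intros t Ht.
      unfold ball in Ht; simpl in Ht; unfold AbsRing_ball, abs, minus, plus, opp in Ht; simpl in Ht.
      apply Rabs_lt_between' in Ht. 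
      assert (Rmin x (1 - x) <= x) by apply Rmin_l.
      assert (Rmin x (1 - x) <= 1 - x) by apply Rmin_r.
      symmetry; apply HI; lra.
      apply (is_derive_const (K := R_AbsRing) (V := R_NormedModule)). }
    apply is_derive_unique in Hd1. apply is_derive_unique in Hd2. congruence. }
  intros x Hx. destruct (Req_dec (h x) 0) as [E|Hne]; auto. exfalso.
  assert (Hp : 0 < Rabs (h x)) by (apply Rabs_pos_lt; auto).
  destruct (epsdelta_cont h x (Hh x) _ Hp) as [d [Hd Hy]].
  set (m := Rmin d (1/4) / 2).
  assert (Hm1 : 0 < m). { unfold m. apply Rdiv_lt_0_compat; [apply Rmin_pos|]; lra. }
  assert (Hm2 : m < d). { unfold m. assert (Rmin d (1/4) <= d) by apply Rmin_l. lra. }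
  assert (Hm3 : m <= 1/8). { unfold m. assert (Rmin d (1/4) <= 1/4) by apply Rmin_r. lra. }
  destruct (Rle_dec x (1/2)).
  - specialize (Hy (x + m)). rewrite Hint in Hy by lra.
    replace (x + m - x) with m in Hy by ring. rewrite Rabs_pos_eq in Hy by lra.
    rewrite Rminus_0_l, Rabs_Ropp in Hy. lra.
  - specialize (Hy (x - m)). rewrite Hint in Hy by lra.
    replace (x - m - x) with (- m) in Hy by ring. rewrite Rabs_Ropp, Rabs_pos_eq in Hy by lra.
    rewrite Rminus_0_l, Rabs_Ropp in Hy. lra.
Qed.


Lemma Rabs_inv_le x a : Rabs x <= a -> - a <= x <= a.
Proof. unfold Rabs; destruct Rcase_abs; lra. Qed.

Definition clamp t := Rmax 0 (Rmin 1 t).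
Definition Ecl (f : R -> R) t := f (clamp t).

Lemma clamp_in t : 0 <= clamp t <= 1.
Proof. unfold clamp, Rmax, Rmin; repeat destruct Rle_dec; lra. Qed.
Lemma clamp_id t : 0 <= t <= 1 -> clamp t = t.
Proof. unfold clamp, Rmax, Rmin; repeat destruct Rle_dec; lra. Qed.
Lemma clamp_lip x y : Rabs (clamp y - clamp x) <= Rabs (y - x).
Proof.
  unfold clamp, Rmax, Rmin; repeat destruct Rle_dec; unfold Rabs; repeat destruct Rcase_abs; lra.
Qed.

Lemma E_eq f t : 0 <= t <= 1 -> Ecl f t = f t.
Proof. intros; unfold Ecl; rewrite clamp_id; auto. Qed.

Lemma E_gc f : cont01 f -> gc (Ecl f).
Proof.
  intros Hf x. apply cont_epsdelta. intros eps Heps.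
  destruct (Hf (clamp x) (clamp_in x) eps Heps) as [d [Hd Hy]].
  exists d; split; auto. intros y Hyx. unfold Ecl. apply Hy. apply clamp_in.
  eapply Rle_lt_trans; [apply clamp_lip|auto].
Qed.

Lemma gc_integrand a b s : gc a -> gc b -> gc (fun y => a (s - y) * b y).
Proof.
  intros Ha Hb y. apply cont_of_pt, continuity_pt_mult; apply pt_of_cont.
  apply (continuous_ext (fun t : R => a (-1 * t + s))). intros t. f_equal. ring.
  apply gc_comp_lin; auto. apply Hb.
Qed.

Lemma gc_minus a b : gc a -> gc b -> gc (fun t => a t - b t).
Proof. intros Ha Hb y. apply cont_of_pt, continuity_pt_minus; apply pt_of_cont; auto. Qed.
Lemma gc_plus a b : gc a -> gc b -> gc (fun t => a t + b t).
Proof. intros Ha Hb y. apply cont_of_pt, continuity_pt_plus; apply pt_of_cont; auto. Qed.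
Lemma gc_one : gc (fun _ => 1).
Proof. intros y; apply continuous_const. Qed.

Theorem lemma3 (beta k kh lh : R -> R) (bb eps : R) :
  cont01 beta ->
  is_supnorm01 beta bb ->
  is_kernel_of beta k ->
  cont01 kh ->
  (forall x, 0 <= x <= 1 -> Rabs (k x - kh x) < eps) ->
  is_inverse_kernel kh lh ->
  forall x, 0 <= x <= 1 ->
    Rabs (lh x) <= (bb + (1 + bb) * eps) * exp ((1 + bb) * eps * x).
Proof.
  intros Hb [Hsup _] [Hk Hkeq] Hkh Hdiff [Hl Hinv] x Hx.
  set (B := Ecl beta). set (K := Ecl k). set (Kh := Ecl kh). set (L := Ecl lh).
  set (one := fun _ : R => 1).
  assert (gB : gc B) by (apply E_gc; auto).
  assert (gK : gc K) by (apply E_gc; auto).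
  assert (gKh : gc Kh) by (apply E_gc; auto).
  assert (gL : gc L) by (apply E_gc; auto).
  assert (g1 : gc one) by apply gc_one.
  set (D := fun t => K t - Kh t).
  assert (gD : gc D) by (apply gc_minus; auto).
  set (G := fun t => D t - conv B D t).
  assert (gBD : gc (conv B D)) by (apply conv_cont; auto).
  assert (gG : gc G) by (apply gc_minus; auto).
  assert (Hbb : 0 <= bb).
  { apply Rle_trans with (Rabs (beta 0)). apply Rabs_pos. apply Hsup; lra. }
  assert (Heps : 0 < eps).
  { apply Rle_lt_trans with (Rabs (k 0 - kh 0)). apply Rabs_pos. apply Hdiff; lra. }
  assert (I1 : forall t, 0 <= t <= 1 -> K t = - B t + conv B K t).
  { intros t Ht. unfold K, B. rewrite !E_eq by auto. rewrite Hkeq by auto. f_equal.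
    apply conv_ext; auto; intros; rewrite E_eq; auto. }
  assert (I2 : forall t, 0 <= t <= 1 -> conv L Kh t = L t - Kh t).
  { assert (Z : forall t, 0 <= t <= 1 -> (fun s => L s - conv L Kh s - Kh s) t = 0).
    { apply zero_lemma.
      - apply gc_minus; auto. apply gc_minus; auto. apply conv_cont; auto.
      - intros t Ht.
        assert (H1 := Hinv one). simpl in H1.
        assert (H1' : one t = one t - conv kh one t + conv lh (fun x => one x - conv kh one x) t).
        { apply H1; auto. intros y _ e He. exists 1; split; [lra|]. intros. unfold one.
          rewrite Rminus_eq_0, Rabs_R0; auto. }
        clear H1.
        assert (E1 : conv kh one t = conv Kh one t).
        { apply conv_ext; auto; intros; unfold Kh; rewrite E_eq; auto. }
        assert (E2 : conv lh (fun x => one x - conv kh one x) t = conv L (fun x => one x - conv Kh one x) t).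
        { apply conv_ext; auto; intros. unfold L; rewrite E_eq; auto.
          f_equal. apply conv_ext; auto; intros; unfold Kh; rewrite E_eq; auto. }
        assert (E3 : conv L (fun x => one x - conv Kh one x) t = conv L one t - conv L (conv Kh one) t).
        { apply conv_minus_r; auto. apply conv_cont; auto. }
        assert (E4 : conv L (conv Kh one) t = conv (conv L Kh) one t).
        { symmetry; apply conv_assoc; auto. }
        assert (E5 : conv (fun s => L s - conv L Kh s - Kh s) one t =
                     conv (fun s => L s - conv L Kh s) one t - conv Kh one t).
        { exact (conv_minus_l (fun s => L s - conv L Kh s) Kh one t
                   (gc_minus _ _ gL (conv_cont _ _ gL gKh)) gKh g1). }
        assert (E6 : conv (fun s => L s - conv L Kh s) one t = conv L one t - conv (conv L Kh) one t).
        { apply conv_minus_l; auto. apply conv_cont; auto. }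
        change (conv (fun s => L s - conv L Kh s - Kh s) one t = 0). rewrite E5, E6. rewrite E1, E2, E3, E4 in H1'. lra. }
    intros t Ht. specialize (Z t Ht). simpl in Z. lra. }
  assert (gLK : gc (conv L K)) by (apply conv_cont; auto).
  assert (HDL : forall y, 0 <= y <= 1 -> conv D L y = conv L K y - L y + Kh y).
  { intros y Hy. rewrite conv_comm by auto. unfold D.
    rewrite conv_minus_r by auto. rewrite I2 by auto. lra. }
  assert (I3 : forall s, 0 <= s <= 1 -> L s = - B s - G s - conv G L s).
  { intros s Hs.
    assert (Ea : conv G L s = conv D L s - conv (conv B D) L s) by (apply conv_minus_l; auto).
    assert (Eb := HDL s Hs).
    assert (Ed : conv (conv B D) L s = conv B (conv D L) s) by (apply conv_assoc; auto).
    assert (Ee : conv B (conv D L) s = conv B (fun y => (conv L K y - L y) + Kh y) s).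
    { apply conv_ext; auto. }
    assert (Ef : conv B (fun y => (conv L K y - L y) + Kh y) s =
                 conv B (conv L K) s - conv B L s + conv B Kh s).
    { rewrite (conv_plus_r (fun y => conv L K y - L y) Kh B s) by (auto; apply gc_minus; auto).
      rewrite conv_minus_r by auto. reflexivity. }
    assert (Eg1 : conv B (conv L K) s = conv B (conv K L) s).
    { apply conv_ext; auto. intros; apply conv_comm; auto. }
    assert (Eg2 : conv B (conv K L) s = conv (conv B K) L s) by (symmetry; apply conv_assoc; auto).
    assert (Eg3 : conv (conv B K) L s = conv (fun y => K y + B y) L s).
    { apply conv_ext; auto. intros t Ht. rewrite (I1 t Ht). ring. }
    assert (Eg4 : conv (fun y => K y + B y) L s = conv K L s + conv B L s) by (apply conv_plus_l; auto).
    assert (Eh : conv L K s = conv K L s) by (apply conv_comm; auto).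
    assert (Ei : conv B D s = conv B K s - conv B Kh s) by (unfold D; apply conv_minus_r; auto).
    assert (Ej := I1 s Hs).
    unfold G, D in *. lra. }
  set (c := (1 + bb) * eps).
  assert (Hc : 0 < c) by (unfold c; apply Rmult_lt_0_compat; lra).
  assert (HBb : forall y, 0 <= y <= 1 -> Rabs (B y) <= bb).
  { intros y Hy. unfold B; rewrite E_eq by auto. apply Hsup; auto. }
  assert (HDb : forall y, 0 <= y <= 1 -> Rabs (D y) <= eps).
  { intros y Hy. unfold D, K, Kh; rewrite !E_eq by auto. left; apply Hdiff; auto. }
  assert (HGb : forall y, 0 <= y <= 1 -> Rabs (G y) <= c).
  { intros y Hy. unfold G.
    assert (Hcv : Rabs (conv B D y) <= (y - 0) * (bb * eps)).
    { apply abs_RInt_le_const. lra. apply ex_conv; auto.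
      intros t Ht. rewrite Rabs_mult. apply Rmult_le_compat; try apply Rabs_pos.
      apply HBb; lra. apply HDb; lra. }
    assert (y * (bb * eps) <= bb * eps).
    { assert (0 <= bb * eps) by (apply Rmult_le_pos; lra). nra. }
    assert (Rabs (D y - conv B D y) <= Rabs (D y) + Rabs (conv B D y)).
    { unfold Rminus. eapply Rle_trans. apply Rabs_triang. rewrite Rabs_Ropp. lra. }
    assert (HD := HDb y Hy). unfold c. lra. }
  apply Rle_trans with ((bb + c) * exp (c * x)).
  2: { unfold c; right; reflexivity. }
  replace (lh x) with (L x) by (unfold L; apply E_eq; auto).
  apply gronwall; auto. unfold c. assert (0 <= (1 + bb) * eps) by (apply Rmult_le_pos; lra). lra.
  intros s Hs.
  assert (Hcv : Rabs (conv G L s) <= c * RInt (fun y => Rabs (L y)) 0 s).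
  { unfold conv. eapply Rle_trans. apply abs_RInt_le. lra. apply ex_conv; auto.
    rewrite <- RInt_scal'. 2: { apply gc_ex, gc_abs; auto. }
    apply RInt_le. lra. apply gc_ex, gc_abs, gc_integrand; auto.
    apply gc_ex. intros y. apply cont_of_pt, continuity_pt_mult.
    apply continuity_pt_const; intros ??; auto. apply pt_of_cont, gc_abs; auto.
    intros y Hy. rewrite Rabs_mult. apply Rmult_le_compat_r. apply Rabs_pos.
    apply HGb. lra. }
  rewrite (I3 s Hs).
  assert (H1 := HBb s Hs). assert (H2 := HGb s Hs).
  apply Rabs_inv_le in H1. apply Rabs_inv_le in H2. apply Rabs_inv_le in Hcv.
  apply Rabs_le. lra.
Qed.
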